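(* For any $a\geq b>0$, the events $\{\tau_a<\widehat{\tau}_b\}$ and $\{a-b<Y_{\widehat{\tau}_b}\}$ coincide almost surely.
   Context: Let $X$ be a spectrally negative Lévy process with non-monotone paths. Let $\overline{X}_t=\sup_{s\leq t}X_s$, $\underline{X}_t=\inf_{s\leq t}X_s$, $Y_t=\overline{X}_t-X_t$, $\widehat{Y}_t=X_t-\underline{X}_t$, $\tau_a=\inf\{t\geq0:Y_t>a\}$, $\widehat{\tau}_b=\inf\{t\geq0:\widehat{Y}_t>b\}$. *)

(* Defs.v *)
From HB Require Import structures.
From mathcomp Require Import all_boot all_order all_algebra.
From mathcomp Require Import all_classical all_reals all_analysis.
Set Implicit Arguments. Unset Strict Implicit. Unset Printing Implicit Defensive.
Import Order.TTheory GRing.Theory Num.Theory.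
Import numFieldNormedType.Exports.
Local Open Scope classical_set_scope.
Local Open Scope ring_scope.

Section Paths.
Variable R : realType.

Definition cadlag (f : R -> R) : Prop :=
  (forall t, 0 <= t -> f x @[x --> t^'+] --> f t) /\
  (forall t, 0 < t -> cvg (f x @[x --> t^'-])).

Definition no_positive_jumps (f : R -> R) : Prop :=
  forall t, 0 < t -> f t - lim (f x @[x --> t^'-]) <= 0.

Definition monotone_path (f : R -> R) : Prop :=
  (forall s t, 0 <= s -> s <= t -> f s <= f t) \/
  (forall s t, 0 <= s -> s <= t -> f t <= f s).

Definition run_sup (f : R -> R) (t : R) : R := sup [set f s | s in `[0, t]].
Definition run_inf (f : R -> R) (t : R) : R := inf [set f s | s in `[0, t]].

(** Y_t = sup_{s<=t} X_s - X_t  and  \hat Y_t = X_t - inf_{s<=t} X_s *)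
Definition drawdown (f : R -> R) (t : R) : R := run_sup f t - f t.
Definition drawup (f : R -> R) (t : R) : R := f t - run_inf f t.

(** inf {t >= 0 : g t > a}, in the extended reals (= +oo if the set is empty) *)
Definition first_exceed (g : R -> R) (a : R) : \bar R :=
  ereal_inf [set t%:E | t in [set t | 0 <= t /\ a < g t]].

End Paths.

Section Levy.
Context {d : measure_display} {T : measurableType d} {R : realType}.
Variable P : probability T R.
Variable X : R -> T -> R.

Definition stationary_increments : Prop :=
  forall s t, 0 <= s -> s <= t -> forall B : set R, measurable B ->
    P [set w | X t w - X s w \in B] = P [set w | X (t - s) w \in B].

Definition independent_increments : Prop :=
  forall (n : nat) (t : nat -> R) (B : nat -> set R),
    0 <= t 0%N -> (forall i, t i <= t i.+1) -> (forall i, measurable (B i)) ->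
    P (\bigcap_(i in [set k | (k < n)%N]) [set w | X (t i.+1) w - X (t i) w \in B i])
    = (\prod_(i < n) P [set w | (X (t i.+1) w - X (t i) w)%R \in B i])%E.

Definition is_levy_process : Prop :=
  (forall t, measurable_fun setT (X t)) /\
  {ae P, forall w, X 0 w = 0} /\
  {ae P, forall w, cadlag (X ^~ w)} /\
  stationary_increments /\ independent_increments.

Definition is_spec_neg_levy_nonmonotone : Prop :=
  is_levy_process /\
  {ae P, forall w, no_positive_jumps (X ^~ w)} /\
  {ae P, forall w, ~ monotone_path (X ^~ w)}.

End Levy.

Definition tau {R : realType} {T : Type} (X : R -> T -> R) (a : R) (w : T) : \bar R :=
  first_exceed (drawdown (X ^~ w)) a.
Definition tauhat {R : realType} {T : Type} (X : R -> T -> R) (b : R) (w : T) : \bar R :=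
  first_exceed (drawup (X ^~ w)) b.

(* Main.v *)
Require Import Defs.
From HB Require Import structures.
From mathcomp Require Import all_boot all_order all_algebra.
From mathcomp Require Import all_classical all_reals all_analysis.
From mathcomp Require Import lra measurable_realfun.
Import Order.TTheory GRing.Theory Num.Theory.
Import numFieldNormedType.Exports.
Local Open Scope classical_set_scope.
Local Open Scope ring_scope.

Section Det.
Variable R : realType.

Lemma near_right_ex (t : R) (P : R -> Prop) :
  (\forall y \near t^'+, P y) -> exists2 d : R, 0 < d & forall y, t < y -> y < t + d -> P y.
Proof.
move=> /nbhs_ballP [e e0 He]; exists e => // y ty yt.
apply: He => //; rewrite /ball /= ltr_distlC; apply/andP; split => //.
  by rewrite (lt_trans _ ty) // ltrBlDr ltrDl.
Qed.

Lemma near_left_ex (t : R) (P : R -> Prop) :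
  (\forall y \near t^'-, P y) -> exists2 d : R, 0 < d & forall y, t - d < y -> y < t -> P y.
Proof.
move=> /nbhs_ballP [e e0 He]; exists e => // y ty yt.
apply: He => //; rewrite /ball /= ltr_distlC; apply/andP; split => //.
  by rewrite (lt_trans yt) // ltrDl.
Qed.
End Det.

Section Det.
Variable R : realType.

Lemma dist_bound (a b : R) : `|a - b| < 1 -> `|b| <= `|a| + 1.
Proof.
move=> h; have -> : b = a - (a - b) by rewrite opprB addrC subrK.
by rewrite (le_trans (ler_normB _ _)) // lerD2l ltW.
Qed.

Lemma sup_ge (A : set R) x : has_ubound A -> A x -> x <= sup A.
Proof. by move=> h Ax; exact: (ub_le_sup h Ax). Qed.

Lemma cadlag_bounded (f : R -> R) : cadlag f ->
  forall t, 0 <= t -> exists M, forall x, 0 <= x -> x <= t -> `|f x| <= M.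
Proof.
move=> [Hr Hl] t t0.
pose A := [set x : R | 0 <= x <= t /\ exists M, forall y, 0 <= y -> y <= x -> `|f y| <= M].
have A0 : A 0.
  split; first by rewrite lexx t0.
  exists `|f 0| => y y0 y0'; have -> : y = 0 by apply/eqP; rewrite eq_le y0' y0.
  by [].
have ubA : ubound A t by move=> x [/andP[_ ->]].
have hsA : has_sup A by split; [exists 0 | exists t].
pose m := sup A.
have m0 : 0 <= m by apply: sup_ge A0; exists t.
have mt : m <= t by apply: ge_sup => //; exists 0.
have Hm : exists M, forall y, 0 <= y -> y <= m -> `|f y| <= M.
  have [m00|mpos] := eqVneq m 0.
    exists `|f 0| => y y0 y0'; have -> : y = 0.
      by apply/eqP; rewrite eq_le y0 andbT -m00.
    by [].
  have mp : 0 < m by rewrite lt_neqAle eq_sym mpos m0.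
  have /cvgrPdist_lt /(_ 1 ltr01) := Hl m mp.
  move=> /near_left_ex [d d0 Hd].
  have [x Ax xm] := sup_adherent d0 hsA.
  case: (Ax) => /andP[x0 xt] [Mx HMx].
  have xlem : x <= m by apply: sup_ge Ax; exists t.
  exists (Num.max Mx (Num.max (`|lim (f x @[x --> m^'-])| + 1) `|f m|)).
  move=> y y0 ym.
  have [yx|xy] := leP y x.
    by rewrite le_max HMx.
  rewrite le_max; apply/orP; right; rewrite le_max.
  have [ylm|] := ltP y m.
    apply/orP; left; apply: dist_bound; apply: Hd => //.
    by rewrite (lt_trans xm).
  move=> my; have -> : y = m by apply/eqP; rewrite eq_le ym my.
  by rewrite lexx orbT.
case: Hm => M HM.
have mt' : m = t.
  apply/eqP; rewrite eq_le mt /=; rewrite leNgt; apply/negP => mlt.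
  have /cvgrPdist_lt /(_ 1 ltr01) := Hr m m0.
  move=> /near_right_ex [d d0 Hd].
  pose z := Num.min (m + d / 2) t.
  have mz : m < z by rewrite lt_min mlt andbT ltrDl divr_gt0.
  have Az : A z.
    split; first by rewrite ge_min lexx orbT andbT (le_trans m0) // ltW.
    exists (Num.max M (`|f m| + 1)) => y y0 yz.
    have [ym|my] := leP y m; first by rewrite le_max HM.
    rewrite le_max; apply/orP; right; apply: dist_bound; apply: Hd => //.
    apply: (le_lt_trans yz); rewrite gt_min; apply/orP; left.
    by rewrite ltrD2l ltr_pdivrMr // ltr_pMr // ltr1n.
  have : z <= m by apply: sup_ge Az; exists t.
  by rewrite leNgt mz.
by exists M => x x0 xt; apply: HM => //; rewrite mt'.
Qed.
End Det.

Section Det.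
Variable R : realType.
Variable f : R -> R.
Hypothesis Hc : cadlag f.

Lemma img_mem (t x : R) : 0 <= x -> x <= t -> [set f s | s in `[0, t]] (f x).
Proof. by move=> x0 xt; exists x => //=; rewrite in_itv /= x0 xt. Qed.

Lemma img_inv (t y : R) : [set f s | s in `[0, t]] y -> exists x, [/\ 0 <= x, x <= t & f x = y].
Proof. by case=> x /=; rewrite in_itv /= => /andP[x0 xt] <-; exists x. Qed.

Lemma img_bnd (t : R) : 0 <= t ->
  has_ubound [set f s | s in `[0, t]] /\ has_lbound [set f s | s in `[0, t]].
Proof.
move=> t0; have [M HM] := @cadlag_bounded R f Hc t t0.
split; [exists M | exists (- M)] => y /img_inv [x [x0 xt <-]].
  by rewrite (le_trans (ler_norm _)) // HM.
by rewrite lerNl (le_trans _ (HM _ x0 xt)) // -normrN ler_norm.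
Qed.

Lemma rs_ge t x : 0 <= x -> x <= t -> f x <= run_sup f t.
Proof.
move=> x0 xt; apply: sup_ge; last exact: img_mem.
by case: (@img_bnd t (le_trans x0 xt)).
Qed.

Lemma ri_le t x : 0 <= x -> x <= t -> run_inf f t <= f x.
Proof.
move=> x0 xt; have [_ hl] := @img_bnd t (le_trans x0 xt).
exact: (ge_inf hl (@img_mem t x x0 xt)).
Qed.

Lemma ri_lb t m : 0 <= t -> (forall x, 0 <= x -> x <= t -> m <= f x) -> m <= run_inf f t.
Proof.
move=> t0 h; apply: lb_le_inf; first by exists (f 0); apply: img_mem.
by move=> y /img_inv [x [x0 xt <-]]; apply: h.
Qed.

Lemma rs_adh t e : 0 <= t -> 0 < e -> exists x, [/\ 0 <= x, x <= t & run_sup f t - e < f x].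
Proof.
move=> t0 e0; have [hu _] := @img_bnd t t0.
have hs : has_sup [set f s | s in `[0, t]] by split => //; exists (f 0); apply: img_mem.
have [y /img_inv [x [x0 xt <-]] hx] := sup_adherent e0 hs.
by exists x.
Qed.

Lemma ri_adh t e : 0 <= t -> 0 < e -> exists x, [/\ 0 <= x, x <= t & f x < run_inf f t + e].
Proof.
move=> t0 e0; have [_ hl] := @img_bnd t t0.
have hs : has_inf [set f s | s in `[0, t]] by split => //; exists (f 0); apply: img_mem.
have [y /img_inv [x [x0 xt <-]] hx] := inf_adherent e0 hs.
by exists x.
Qed.
End Det.

Section FE.
Set Implicit Arguments. Unset Strict Implicit.
Variable R : realType.
Variable g : R -> R.
Variable a : R.

Lemma fe_le t : 0 <= t -> a < g t -> (first_exceed g a <= t%:E)%E.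
Proof. by move=> t0 at0; apply: ge_ereal_inf; exists t%:E => //; exists t. Qed.

Lemma fe_lt (x : \bar R) : (first_exceed g a < x)%E <->
  exists t, [/\ 0 <= t, a < g t & (t%:E < x)%E].
Proof.
split.
  by move=> /ereal_inf_lt [_ [t [t0 at0] <-] tx]; exists t.
by case=> t [t0 at0 tx]; apply: le_lt_trans tx; apply: fe_le.
Qed.

Lemma fe_fin s : first_exceed g a = s%:E -> 0 <= s.
Proof.
move=> hs; rewrite -lee_fin -hs; apply/ereal_infP => _ [t [t0 _] <-].
by rewrite lee_fin.
Qed.

Lemma fe_before s t : first_exceed g a = s%:E -> 0 <= t -> t < s -> g t <= a.
Proof.
move=> hs t0 ts; rewrite leNgt; apply/negP => at0.
by have := @fe_le t t0 at0; rewrite hs lee_fin leNgt ts.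
Qed.

Lemma fe_after s e : first_exceed g a = s%:E -> 0 < e ->
  exists t, [/\ s <= t, t < s + e & a < g t].
Proof.
move=> hs e0.
have : (first_exceed g a < (s + e)%:E)%E by rewrite hs lte_fin ltrDl.
move=> /fe_lt [t [t0 at0 tx]]; exists t; split => //.
  by rewrite -lee_fin -hs (@fe_le t).
Qed.
End FE.
Unset Implicit Arguments. Set Strict Implicit.

Section Main.
Variable R : realType.
Variable f : R -> R.
Hypothesis Hc : cadlag f.
Hypothesis Hj : no_positive_jumps f.
Variables b s : R.
Hypothesis b0 : 0 < b.
Hypothesis hs : first_exceed (drawup f) b = s%:E.

Let s0 : 0 <= s := fe_fin hs.

Lemma H_le_b : drawup f s <= b.
Proof.
have b1 : (0:R) < b := b0.
have [s00|snz] := eqVneq s 0.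
  rewrite /drawup; suff h : f s <= run_inf f s by lra.
  apply: ri_lb => // x x0 xs; have -> : x = s by apply/eqP; rewrite eq_le xs s00 x0.
  by [].
have sp : 0 < s by rewrite lt_neqAle eq_sym snz s0.
apply/ler_addgt0Pr => e e0.
set L := lim (f x @[x --> s^'-]).
have hj := Hj s sp; rewrite -/L in hj.
have /cvgrPdist_lt /(_ e e0) := (Hc.2 s sp).
rewrite -/L => /near_left_ex [d d0 Hd].
pose t := Num.max (s - d / 2) (s / 2).
have tlt : t < s by rewrite gt_max; apply/andP; split; lra.
have tgt : s - d < t by rewrite lt_max; apply/orP; left; lra.
have t0 : 0 <= t by rewrite le_max; apply/orP; right; lra.
have Ht : drawup f t <= b by apply: (fe_before hs t0 tlt).
have Lt : `|L - f t| < e by apply: Hd.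
rewrite /drawup.
suff : f s - (b + e) <= run_inf f s by lra.
apply: ri_lb => // x x0 xs.
have [xt|tx] := leP x t.
  have := @ri_le _ _ Hc t x x0 xt; rewrite /drawup in Ht.
  move: Lt; rewrite ltr_distlC => /andP[h1 h2]; lra.
have [xs'|] := ltP x s.
  have := Hd x (lt_trans tgt tx) xs'; rewrite ltr_distlC => /andP[h1 h2]; lra.
move=> sx; have -> : x = s by apply/eqP; rewrite eq_le xs sx.
lra.
Qed.

Lemma H_ge_b : b <= drawup f s.
Proof.
have b1 : (0:R) < b := b0.
rewrite leNgt; apply/negP => Hs.
pose e := Num.min (b - drawup f s) (b / 2).
have e0 : 0 < e by rewrite lt_min; apply/andP; split; lra.
have e1 : e <= b - drawup f s by rewrite ge_min lexx.
have e2 : e <= b / 2 by rewrite ge_min lexx orbT.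
have /cvgrPdist_lt /(_ e e0) := (Hc.1 s s0).
move=> /near_right_ex [d d0 Hd].
have [t [st tsd bt]] := fe_after hs d0.
have [ts|st'] := eqVneq t s.
  by move: bt; rewrite ts ltNge ltW.
have stl : s < t by rewrite lt_neqAle eq_sym st' st.
have := Hd t stl tsd; rewrite ltr_distlC => /andP[h1 h2].
suff : f t - b <= run_inf f t by move: bt; rewrite /drawup; lra.
apply: ri_lb => [|x x0 xt]; first exact: le_trans s0 st.
have [xs|sx] := leP x s.
  have := @ri_le _ _ Hc s x x0 xs; move: e1; rewrite /drawup; lra.
have := Hd x sx (le_lt_trans xt tsd); rewrite ltr_distlC => /andP[h3 h4]; lra.
Qed.

Lemma rs_le_ub t m : 0 <= t -> (forall x, 0 <= x -> x <= t -> f x <= m) -> run_sup f t <= m.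
Proof.
move=> t0 h; apply: ge_sup; first by exists (f 0); apply: img_mem.
by move=> y /img_inv [x [x0 xt <-]]; apply: h.
Qed.

Lemma main_det a : b <= a ->
  (first_exceed (drawdown f) a < s%:E)%E <-> a - b < drawdown f s.
Proof.
have b1 : (0:R) < b := b0.
move=> ba; have Hle := H_le_b; have Hge := H_ge_b.
rewrite /drawup in Hle Hge; rewrite /drawdown.
split.
  move=> /fe_lt [t [t0 at0 ts]]; rewrite lte_fin in ts; rewrite /drawdown in at0.
  have h1 := @ri_le _ _ Hc s t t0 (ltW ts).
  have h2 : run_sup f t <= run_sup f s.
    apply: rs_le_ub => // x x0 xt; apply: rs_ge => //; lra.
  lra.
move=> hY.
pose ep := run_sup f s - run_inf f s - a.
have ep0 : 0 < ep by rewrite /ep; lra.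
pose dl := Num.min (ep / 2) b.
have dl0 : 0 < dl by rewrite lt_min; apply/andP; split; lra.
have dl1 : dl <= ep / 2 by rewrite ge_min lexx.
have dl2 : dl <= b by rewrite ge_min lexx orbT.
have [u [u0 us hu]] := @ri_adh _ _ Hc s dl s0 dl0.
have ep2 : 0 < ep / 2 by lra.
have [v [v0 vs hv]] := @rs_adh _ _ Hc s (ep / 2) s0 ep2.
have uls : u < s.
  rewrite lt_neqAle us andbT; apply/negP => /eqP eus; move: hu; rewrite eus; lra.
have [vu|uv] := leP v u.
  apply/fe_lt; exists u; split; [done| |by rewrite lte_fin].
  rewrite /drawdown; have := @rs_ge _ _ Hc u v v0 vu; rewrite /ep in hu hv dl1; lra.
exfalso.
have hIv := @ri_le _ _ Hc v u u0 (ltW uv).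
have [vls|] := ltP v s.
  have := fe_before hs v0 vls; rewrite /drawup /ep in hu hv dl1 *; lra.
move=> sv; have evs : v = s by apply/eqP; rewrite eq_le vs sv.
rewrite evs in hIv hv; rewrite /ep in hu hv dl1; lra.
Qed.
End Main.

Section Grid.
Variable R : realType.

Lemma grid_pt (x : R) (k : nat) : 0 <= x ->
  let g := (Num.truncn (x * k.+1%:R)).+1%:R / k.+1%:R in
  x < g /\ g <= x + 1 / k.+1%:R.
Proof.
move=> x0 g; have K0 : (0:R) < k.+1%:R by rewrite ltr0n.
have xk0 : 0 <= x * k.+1%:R by rewrite mulr_ge0 // ltW.
have /andP[h1 h2] := Num.Theory.truncn_itv xk0.
split.
  by rewrite /g ltr_pdivlMr.
rewrite /g ler_pdivrMr // mulrDl mul1r mulVf ?gt_eqF //.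
by rewrite -natr1 lerD2r.
Qed.


Lemma mono_from_grid (f : R -> R)
  (Hr : forall t, 0 <= t -> f x @[x --> t^'+] --> f t)
  (H : forall k i j : nat, (i <= j)%N -> f (j%:R / k.+1%:R) <= f (i%:R / k.+1%:R)) :
  forall s t : R, 0 <= s -> s <= t -> f t <= f s.
Proof.
move=> s t s0 st; rewrite leNgt; apply/negP => hlt.
pose e := (f t - f s) / 2.
have e0 : 0 < e by rewrite /e; lra.
have /cvgrPdist_lt /(_ e e0) := Hr s s0.
move=> /near_right_ex [ds ds0 Hs].
have t0 : 0 <= t by lra.
have /cvgrPdist_lt /(_ e e0) := Hr t t0.
move=> /near_right_ex [dt dt0 Ht].
pose m := Num.min ds dt.
have m0 : 0 < m by rewrite lt_min ds0 dt0.
pose k := Num.truncn (1 / m).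
have K0 : (0:R) < k.+1%:R by rewrite ltr0n.
have km : 1 / k.+1%:R < m.
  rewrite ltr_pdivrMr // mulrC -ltr_pdivrMr //; exact: Num.Theory.truncnS_gt.
have [gs1 gs2] := grid_pt s k s0.
have [gt1 gt2] := grid_pt t k t0.
have hij : ((Num.truncn (s * k.+1%:R)).+1 <= (Num.truncn (t * k.+1%:R)).+1)%N.
  by rewrite ltnS le_truncn // ler_pM2r.
have hH := H k _ _ hij.
set gs := (Num.truncn (s * _)).+1%:R / _ in gs1 gs2 hH *; set gt := (Num.truncn (t * _)).+1%:R / _ in gt1 gt2 hH *.
have mds : m <= ds by rewrite ge_min lexx.
have mdt : m <= dt by rewrite ge_min lexx orbT.
set iK := 1 / k.+1%:R in km gs2 gt2; clearbody gs gt iK.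
have := Hs gs gs1 ltac:(lra); rewrite ltr_distlC => /andP[h1 h2].
have := Ht gt gt1 ltac:(lra); rewrite ltr_distlC => /andP[h3 h4].
rewrite /e in h1 h2 h3 h4; lra.
Qed.
End Grid.

Section Prob.
Context {d : measure_display} {T : measurableType d} {R : realType}.
Variable P : probability T R.
Variable X : R -> T -> R.
Hypothesis Hm : forall t, measurable_fun setT (X t).
Hypothesis Hst : stationary_increments P X.
Hypothesis Hind : independent_increments P X.

Lemma meas_incr t s (B : set R) : measurable B ->
  measurable [set w | X t w - X s w \in B].
Proof.
move=> mB; have := measurable_funB (Hm t) (Hm s) measurableT mB.
rewrite setTI; congr measurable; apply/seteqP; split => w /=; rewrite inE //.
Qed.

Lemma meas_X t (B : set R) : measurable B -> measurable [set w | X t w \in B].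
Proof.
move=> mB; have := Hm t measurableT B mB.
rewrite setTI; congr measurable; apply/seteqP; split => w /=; rewrite inE //.
Qed.

Lemma incr_prod (L : R) (B : set R) (n : nat) : 0 <= L -> measurable B ->
  P (\bigcap_(i in [set k | (k < n)%N]) [set w | X (i.+1%:R * L) w - X (i%:R * L) w \in B])
  = (P [set w | X L w \in B] ^+ n)%E.
Proof.
move=> L0 mB.
rewrite (Hind n (fun i => i%:R * L) (fun _ => B)) //; first last.
- by move=> i; rewrite ler_wpM2r // ler_nat.
- by rewrite mul0r.
rewrite (eq_bigr (fun _ => P [set w | X L w \in B])); last first.
  move=> i _; rewrite Hst //; last by rewrite ler_wpM2r // ler_nat.
    by congr (P _); apply/seteqP; split => w /=; rewrite -mulrBl -natrB // subSnn mul1r.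
  by rewrite mulr_ge0.
rewrite big_const_ord; elim: n => [|n IH] //; by rewrite iterS IH -expeS.
Qed.

Lemma in_oy (c x : R) : (x \in `]c, +oo[%classic) = (c < x).
Proof. by apply/idP/idP; rewrite in_setE /= in_itv /= andbT. Qed.

Lemma no_pos (b : R) :
  (forall L : R, 0 <= L -> P [set w | X L w \in `]b, +oo[%classic] = 0%E) ->
  forall s t c : R, 0 <= s -> s <= t -> 0 < c ->
  P [set w | X t w - X s w \in `]c, +oo[%classic] = 0%E.
Proof.
move=> H0 s t c s0 st c0; rewrite Hst //.
have u0 : 0 <= t - s by rewrite subr_ge0.
set u := t - s in u0 *.
set p := P _.
have p0 : (0 <= p)%E by apply: measure_ge0.
apply/eqP; rewrite eq_le p0 andbT leNgt; apply/negP => pp.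
pose n := (Num.truncn (`|b| / c)).+1.
have hn : `|b| < n%:R * c.
  by rewrite -ltr_pdivrMr //; exact: Num.Theory.truncnS_gt.
have := @incr_prod u _ n u0 (measurable_itv `]c, +oo[); rewrite -/p => hP.
have hpn : (0 < p ^+ n)%E by apply: expe_gt0.
have hsub : \bigcap_(i in [set k | (k < n)%N]) [set w | X (i.+1%:R * u) w - X (i%:R * u) w \in `]c, +oo[%classic]
  `<=` [set w | X (n%:R * u) w - X 0 w \in `]b, +oo[%classic].
  move=> w /= hw; rewrite in_oy.
  have ht := telescope_sumr (fun k => X (k%:R * u) w) (leq0n n).
  rewrite mul0r in ht; rewrite -ht big_mkord.
  apply: (le_lt_trans (ler_norm b)); apply: (lt_le_trans hn).
  have -> : n%:R * c = \sum_(i < n) c by rewrite sumr_const card_ord mulr_natl.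
  apply: ler_sum => i _.
  have := hw i (ltn_ord i); rewrite /= in_oy => /ltW.
  by [].
have hle := @le_measure _ _ _ P _ _ _ _ hsub.
have hR : P [set w | X (n%:R * u) w - X 0 w \in `]b, +oo[%classic] = 0%E.
  rewrite Hst ?subr0 ?H0 //; by rewrite mulr_ge0.
have hz : (P (\bigcap_(i in [set k | (k < n)%N]) [set w | (X (i.+1%:R * u) w - X (i%:R * u) w)%R \in `]c, +oo[%classic]) <= 0)%E.
  apply: (le_trans (hle _ _)).
  - rewrite inE; apply: bigcap_measurableType => k _; apply: meas_incr; exact: measurable_itv.
  - rewrite inE; apply: meas_incr; exact: measurable_itv.
  by rewrite le_eqVlt; apply/orP; left; apply/eqP; exact: hR.
by move: hz; rewrite hP leNgt hpn.
Qed.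


Lemma small_pos (x : R) : (forall m : nat, x <= 1 / m.+1%:R) -> x <= 0.
Proof.
move=> h; rewrite leNgt; apply/negP => x0.
pose m := Num.truncn (1 / x).
have := h m; rewrite leNgt => /negP; apply.
rewrite ltr_pdivrMr ?ltr0n // mulrC -ltr_pdivrMr //; exact: Num.Theory.truncnS_gt.
Qed.

Lemma ae_grid (b : R) :
  (forall L : R, 0 <= L -> P [set w | X L w \in `]b, +oo[%classic] = 0%E) ->
  \forall w \ae P, forall k i j : nat, (i <= j)%N ->
     X (j%:R / k.+1%:R) w <= X (i%:R / k.+1%:R) w.
Proof.
move=> H0.
have H1 : forall k i j m : nat, \forall w \ae P, (i <= j)%N ->
    X (j%:R / k.+1%:R) w - X (i%:R / k.+1%:R) w <= 1 / m.+1%:R.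
  move=> k i j m.
  have K0 : (0:R) < k.+1%:R by rewrite ltr0n.
  case: (leqP i j) => ij; last by apply: aeW.
  exists [set w | X (j%:R / k.+1%:R) w - X (i%:R / k.+1%:R) w \in `](1 / m.+1%:R), +oo[%classic].
  split.
  - by apply: meas_incr; exact: measurable_itv.
  - apply: (no_pos _ H0); first by rewrite divr_ge0 // ler0n.
      by rewrite ler_pM2r ?invr_gt0 // ler_nat.
    by rewrite divr_gt0 ?ltr0n.
  - move=> w /= hw; rewrite in_oy; rewrite ltNge; apply/negP => hle; apply: hw => _; exact: hle.
have := ae_foralln (fun k => ae_foralln (fun i => ae_foralln (fun j => ae_foralln (fun m => H1 k i j m)))).
apply: filterS => w hw k i j ij; rewrite -subr_le0; apply: small_pos => m.
exact: hw.
Qed.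
End Prob.
Lemma pow_small {R : realType} (z y : R) : 0 <= z -> z < 1 -> 0 < y -> exists n : nat, z ^+ n < y.
Proof.
move=> z0 z1 y0.
have hz : `|z| < 1 by rewrite ger0_norm.
have /cvgrPdist_lt /(_ y y0) := cvg_expr hz.
case=> N _ HN; exists N; have := HN N (leqnn N).
by rewrite sub0r normrN ger0_norm ?exprn_ge0.
Qed.

Lemma meas_pow0 (R : realType) (x : \bar R) (z : R) : (0 <= x)%E -> 0 <= z -> z < 1 ->
  (forall n, x <= (z ^+ n)%:E)%E -> x = 0%E.
Proof.
move=> x0 z0 z1 h.
have x1 : (x <= 1)%E by have := h 0%N; rewrite expr0.
have xf : x \is a fin_num by rewrite ge0_fin_numE ?(le_lt_trans x1) ?ltey.
rewrite -(fineK xf); congr (_%:E); apply/eqP; rewrite eq_le; apply/andP; split; last first.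
  by rewrite -lee_fin fineK.
rewrite leNgt; apply/negP => yp.
have [n hn] := @pow_small R z (fine x) z0 z1 yp.
by have := h n; rewrite -(fineK xf) lee_fin leNgt hn.
Qed.


Section Prob2.
Context {d : measure_display} {T : measurableType d} {R : realType}.
Variable P : probability T R.
Variable X : R -> T -> R.
Hypothesis Hm : forall t, measurable_fun setT (X t).
Hypothesis Hst : stationary_increments P X.
Hypothesis Hind : independent_increments P X.
Hypothesis Hcad : {ae P, forall w, cadlag (X ^~ w)}.
Hypothesis Hnm : {ae P, forall w, ~ monotone_path (X ^~ w)}.

Lemma ae_False : ~ (\forall w \ae P, False).
Proof.
move=> hF.
have PF : ProperFilter (almost_everywhere P).
  apply: ae_properfilter_algebraOfSetsType; have h1 := probability_setT P; exact: (eq_ind _ (fun z => (0 < z)%E) lte01 _ (esym h1)).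
by have [w []] := filter_ex hF.
Qed.

Lemma exists_L (b : R) : exists L : R, 0 <= L /\ (0 < P [set w | X L w \in `]b, +oo[%classic])%E.
Proof.
have [//|hn] := pselect (exists L : R, 0 <= L /\ (0 < P [set w | X L w \in `]b, +oo[%classic])%E).
have H0 : forall L : R, 0 <= L -> P [set w | X L w \in `]b, +oo[%classic] = 0%E.
  move=> L L0; apply/eqP; rewrite eq_le measure_ge0 andbT leNgt; apply/negP => h.
  by apply: hn; exists L.
have hg := @ae_grid _ _ _ P X Hm Hst Hind b H0.
apply: False_ind; apply: ae_False.
have hAB : \forall w \ae P, (forall k i j : nat, (i <= j)%N ->
     X (j%:R / k.+1%:R) w <= X (i%:R / k.+1%:R) w) /\ cadlag (X ^~ w).
  by apply: (@filterS2 _ _ _ _ _ _ _ hg Hcad) => w a c; split.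
apply: (@filterS2 _ _ _ _ _ _ _ hAB Hnm) => w [hgw hc] hnm; apply: hnm; right => s t s0 st.
exact: (@mono_from_grid R (X^~w) hc.1 hgw s t s0 st).
Qed.

Lemma in_yo (c x : R) : (x \in `]-oo, c]%classic) = (x <= c).
Proof. by apply/idP/idP; rewrite in_setE /= in_itv /=. Qed.

Lemma ae_sigma_fin (b : R) :
  \forall w \ae P, (first_exceed (drawup (X ^~ w)) b < +oo)%E.
Proof.
have [L [L0 qp]] := exists_L b.
set q := P _ in qp.
have mq : measurable [set w | X L w \in `]b, +oo[%classic] by apply: meas_X => //; exact: measurable_itv.
have hr : P [set w | X L w \in `]-oo, b]%classic] = (1 - q)%E.
  rewrite -probability_setC //; congr (P _); apply/seteqP; split => w /=.
    by rewrite in_yo in_oy leNgt => /negP.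
  by rewrite in_yo in_oy leNgt => /negP.
have q1 : (q <= 1)%E by apply: probability_le1.
have qf : q \is a fin_num by rewrite ge0_fin_numE ?(le_lt_trans q1) ?ltey // ltW.
set fq := fine q.
have hq : q = fq%:E by rewrite fineK.
have fq0 : 0 < fq by rewrite -lte_fin -hq.
have fq1 : fq <= 1 by rewrite -lee_fin -hq.
have hex : \forall w \ae P, exists k : nat, b < X (k.+1%:R * L) w - X (k%:R * L) w.
  exists (\bigcap_(k in [set: nat]) [set w | X (k.+1%:R * L) w - X (k%:R * L) w \in `]-oo, b]%classic]).
  split.
  - apply: bigcap_measurableType => k _; apply: meas_incr => //; exact: measurable_itv.
  - apply: (@meas_pow0 R _ (1 - fq)); [exact: measure_ge0 | lra | lra |] => n.
    have -> : (((1 - fq) ^+ n)%:E = P (\bigcap_(i in [set k | (k < n)%N])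
        [set w | (X (i.+1%:R * L) w - X (i%:R * L) w)%R \in `]-oo, b]%classic]))%E.
      rewrite (@incr_prod _ _ _ P X Hst Hind L _ n L0 (measurable_itv _)) hr hq.
      by rewrite EFin_expe EFinB.
    apply: le_measure; rewrite ?inE.
    + apply: bigcap_measurableType => k _; apply: meas_incr => //; exact: measurable_itv.
    + apply: bigcap_measurableType => k _; apply: meas_incr => //; exact: measurable_itv.
    + by move=> w hw k _; exact: hw.
  - move=> w /= hw k _; rewrite /= in_yo leNgt; apply/negP => hk; apply: hw; by exists k.
apply: (@filterS2 _ _ _ _ _ _ _ hex Hcad) => w [k hk] hc.
have u0 : 0 <= k%:R * L by rewrite mulr_ge0.
have ut : k%:R * L <= k.+1%:R * L by rewrite ler_wpM2r // ler_nat.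
have hI := @ri_le _ _ hc (k.+1%:R * L) (k%:R * L) u0 ut.
apply: (le_lt_trans (@fe_le _ (drawup (X ^~ w)) b (k.+1%:R * L) (le_trans u0 ut) _)); last exact: ltey.
rewrite /drawup /=; lra.
Qed.
End Prob2.


Lemma fe_ge0 {R : realType} (g : R -> R) (a : R) : (0 <= first_exceed g a)%E.
Proof. by apply/ereal_infP => _ [t [t0 _] <-]; rewrite lee_fin. Qed.

Theorem lemma1 (d : measure_display) (T : measurableType d) (R : realType)
  (P : probability T R) (X : R -> T -> R) :
  is_spec_neg_levy_nonmonotone P X ->
  forall a b : R, 0 < b -> b <= a ->
  {ae P, forall w,
     (tau X a w < tauhat X b w)%E <->
     ((tauhat X b w < +oo)%E /\ a - b < drawdown (X ^~ w) (fine (tauhat X b w)))}.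
Proof.
move=> [[Hm [_ [Hcad [Hst Hind]]]] [Hnj Hnm]] a b b0 ba.
have hs := @ae_sigma_fin _ _ _ P X Hm Hst Hind Hcad Hnm b.
have h2 : \forall w \ae P, (first_exceed (drawup (X ^~ w)) b < +oo)%E /\ cadlag (X ^~ w).
  by apply: (@filterS2 _ _ _ _ _ _ _ hs Hcad) => w u v; split.
apply: (@filterS2 _ _ _ _ _ _ _ h2 Hnj) => w [hf hc] hj.
rewrite /tau /tauhat.
have hfin : first_exceed (drawup (X ^~ w)) b \is a fin_num.
  by rewrite ge0_fin_numE // fe_ge0.
set s := fine (first_exceed (drawup (X ^~ w)) b).
have hsE : first_exceed (drawup (X ^~ w)) b = s%:E by rewrite /s fineK.
rewrite hsE /=.
have hm := @main_det R (X ^~ w) hc hj b s b0 hsE a ba.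
split.
  by move=> h; split; [exact: ltey | exact/hm].
by move=> [_ h]; exact/hm.
Qed.
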